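(* Let $\mathfrak X=(\mathbb R,d_{\rm e},\mu)$, where $d_{\rm e}$ is the Euclidean metric and $\mu$ is a Borel measure such that every open interval (ball) has finite strictly positive measure. Then the noncentered maximal operator $\mathcal M_{\mathfrak X}$ possesses the dichotomy property.
   Context: $L^1_{\rm loc}(\mu)$: functions integrable on every open ball. $\mathcal Mf(x)=\sup_{B\ni x}\mu(B)^{-1}\int_B|f|d\mu$ over open balls containing $x$. $\mathcal M$ possesses the dichotomy property if for every $f\in L^1_{\rm loc}(\mu)$ either $\mu(\{\mathcal Mf=\infty\})=0$ or $\mathcal Mf(x)=\infty$ for all $x\in X$. *)

(* Defs.v *)
From HB Require Import structures.
From mathcomp Require Import all_boot all_order all_algebra.
From mathcomp Require Import all_classical all_reals all_analysis.
Set Implicit Arguments. Unset Strict Implicit. Unset Printing Implicit Defensive.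
Import Order.TTheory GRing.Theory Num.Theory.
Import numFieldNormedType.Exports.
Local Open Scope classical_set_scope.
Local Open Scope ring_scope.
Local Open Scope ereal_scope.

Definition ball_avg (R : realType) (mu : {measure set R -> \bar R})
  (f : R -> R) (c r : R) : \bar R :=
  ((fine (mu (ball c r)))^-1)%:E * \int[mu]_(y in ball c r) (`|f y|)%:E.

Definition maxop (R : realType) (mu : {measure set R -> \bar R})
  (f : R -> R) (x : R) : \bar R :=
  ereal_sup [set a : \bar R | exists (c r : R),
    [/\ (0 < r)%R, ball c r x & a = ball_avg mu f c r]].

Definition L1loc (R : realType) (mu : {measure set R -> \bar R})
  (f : R -> R) : Prop :=
  forall (c r : R), (0 < r)%R -> mu.-integrable (ball c r) (EFin \o f).

Definition dichotomy (R : realType) (mu : {measure set R -> \bar R}) : Prop :=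
  forall f : R -> R, L1loc mu f ->
    mu [set x | maxop mu f x = +oo] = 0 \/ (forall x : R, maxop mu f x = +oo).

(* Main.v *)
Require Import Defs.
From HB Require Import structures.
From mathcomp Require Import all_boot all_order all_algebra.
From mathcomp Require Import all_classical all_reals all_analysis.
From mathcomp Require Import ring lra.
From mathcomp Require Import measurable_realfun.
Import Order.TTheory GRing.Theory Num.Theory.
Import numFieldNormedType.Exports.
Set Implicit Arguments. Unset Strict Implicit. Unset Printing Implicit Defensive.
Local Open Scope classical_set_scope.
Local Open Scope ring_scope.
Local Open Scope ereal_scope.
Lemma ballP (R:realType) (c r x : R) : ball c r x <-> (`|c - x| < r)%R.
Proof. by rewrite -ball_normE /ball_. Qed.

Lemma ballP2 (R:realType) (c r x : R) : ball c r x <-> (c - r < x < c + r)%R.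
Proof. by rewrite ballP ltr_distl; split => /andP[h1 h2]; apply/andP; split; lra. Qed.

Definition U (R : realType) (s : seq (R * R)) : set R :=
  \big[setU/set0]_(b <- s) ball b.1 b.2.

Lemma U_mem (R : realType) (s : seq (R*R)) b : b \in s -> ball b.1 b.2 `<=` U s.
Proof.
move=> bs; rewrite /U (perm_big _ (perm_to_rem bs)) big_cons => x bx; by left.
Qed.

Lemma U_cons (R : realType) (s : seq (R*R)) b : U (b :: s) = ball b.1 b.2 `|` U s.
Proof. by rewrite /U big_cons. Qed.

Lemma EXT (R : realType) (s : seq (R*R)) : s != [::] ->
  exists p q, [/\ p \in s, q \in s & forall e, e \in s ->
     (p.1 - p.2 <= e.1 - e.2)%R /\ (e.1 + e.2 <= q.1 + q.2)%R].
Proof.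
elim: s => // e s IH _.
have [->|sn] := eqVneq s [::].
  exists e, e; split; rewrite ?mem_seq1 // => e'; rewrite mem_seq1 => /eqP ->; lra.
have [p [q [ps qs H]]] := IH sn.
exists (if (e.1 - e.2 < p.1 - p.2)%R then e else p).
exists (if (q.1 + q.2 < e.1 + e.2)%R then e else q).
split.
- by case: ifP => _; rewrite inE ?eqxx ?ps ?orbT.
- by case: ifP => _; rewrite inE ?eqxx ?qs ?orbT.
move=> e'; rewrite inE => /orP[/eqP ->|/H [h1 h2]].
  by split; case: ifPn => h; rewrite ?lexx //; rewrite -leNgt in h.
split; case: ifPn => h //; rewrite ?lexx //; lra.
Qed.

Lemma geo (R : realType) (p q e : R*R) (y : R) :
  ball p.1 p.2 y -> ball q.1 q.2 y ->
  (p.1 - p.2 <= e.1 - e.2)%R -> (e.1 + e.2 <= q.1 + q.2)%R ->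
  ball e.1 e.2 `<=` ball p.1 p.2 `|` ball q.1 q.2.
Proof.
move=> /ballP2 /andP[p1 p2] /ballP2 /andP[q1 q2] h1 h2 w /ballP2 /andP[w1 w2].
have [wy|wy] := leP w y.
  by left; apply/ballP2; apply/andP; split; lra.
by right; apply/ballP2; apply/andP; split; lra.
Qed.
Definition minimal (R : realType) (t : seq (R*R)) :=
  forall b, b \in t -> ~ (ball b.1 b.2 `<=` U (rem b t)).

Lemma count_le2 (R : realType) (t : seq (R*R)) (y : R) : uniq t -> minimal t ->
  (count (fun b : R*R => y \in (ball b.1 b.2 : set R)) t <= 2)%N.
Proof.
move=> ut mt; rewrite leqNgt; apply/negP => c3.
set s' := [seq b <- t | y \in (ball b.1 b.2 : set R)].
have us' : uniq s' by exact: filter_uniq.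
have ss' : size s' = count (fun b : R*R => y \in (ball b.1 b.2 : set R)) t by rewrite size_filter.
have sn : s' != [::] by apply/eqP => e; rewrite e /= in ss'; rewrite -ss' in c3.
have [p [q [ps qs H]]] := EXT sn.
have [e es [ep eq]] : exists2 e, e \in s' & e != p /\ e != q.
  apply/not_exists2P => hn.
  have sub : {subset s' <= [:: p; q]}.
    move=> e es; rewrite !inE; apply/negPn/negP => /norP[np nq].
    by case: (hn e) => h; apply: h => //; split.

  have := uniq_leq_size us' sub; rewrite /= ss' => h.
  by move: c3; rewrite ltnNge h.
have [h1 h2] := H e es.
move: ps qs es; rewrite !mem_filter => /andP[yp pt] /andP[yq qt] /andP[ye et].
apply: (mt e et).
have := geo (set_mem yp) (set_mem yq) h1 h2.
move=> sub w /sub [wp|wq].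
  by apply: (U_mem _ wp); rewrite (mem_rem_uniq _ ut) inE eq_sym ep.
by apply: (U_mem _ wq); rewrite (mem_rem_uniq _ ut) inE eq_sym eq.
Qed.

Lemma U_rem (R : realType) (s : seq (R*R)) b : b \in s ->
  ball b.1 b.2 `<=` U (rem b s) -> U (rem b s) = U s.
Proof.
move=> bs sub; rewrite [in RHS]/U (perm_big _ (perm_to_rem bs)) big_cons -/(U _).
by apply/seteqP; split => x; [right | case=> // /sub].
Qed.

Lemma RED (R : realType) (s : seq (R*R)) : uniq s ->
  exists t, [/\ {subset t <= s}, uniq t, U t = U s & minimal t].
Proof.
move: {2}(size s) (leqnn (size s)) => n; elim: n s => [|n IH] s.
  rewrite leqn0 => /nilP -> _; exists [::]; split => // b; by rewrite in_nil.
move=> sz us.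
have [m|nm] := pselect (minimal s); first by exists s; split.
move: nm; rewrite /minimal => /existsNP [b] /not_implyP [bs /contrapT sb].
have sz' : (size (rem b s) <= n)%N by rewrite size_rem //; case: (size s) sz.
have [t [h1 h2 h3 h4]] := IH (rem b s) sz' (rem_uniq _ us).
exists t; split => //.
- by move=> x /h1 /mem_rem.
- by rewrite h3 U_rem.
Qed.
Lemma U_P (R : realType) (s : seq (R*R)) x : U s x <-> exists2 b, b \in s & ball b.1 b.2 x.
Proof.
elim: s => [|b s IH]; first by rewrite /U big_nil; split => [[]|[b]]; rewrite ?in_nil.
rewrite U_cons; split.
  case=> [h|/IH [b' h1 h2]]; first by exists b; rewrite ?inE ?eqxx.
  by exists b'; rewrite // inE h1 orbT.
move=> [b']; rewrite inE => /orP[/eqP -> h|h1 h2]; first by left.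
by right; apply/IH; exists b'.
Qed.

Lemma U_undup (R : realType) (s : seq (R*R)) : U (undup s) = U s.
Proof.
by apply/seteqP; split => x /U_P [b h1 h2]; apply/U_P; exists b; rewrite ?mem_undup in h1 *.
Qed.

Lemma U_measurable (R : realType) (s : seq (R*R)) : measurable (U s).
Proof. by apply: bigsetU_measurable => b _; exact: measurable_realfun.measurable_ball. Qed.

Lemma mu_U_le (R : realType) (mu : {measure set R -> \bar R}) (s : seq (R*R)) :
  mu (U s) <= \sum_(b <- s) mu (ball b.1 b.2).
Proof.
elim: s => [|b s IH]; first by rewrite /U !big_nil measure0.
rewrite U_cons big_cons; apply: le_trans (measureU2 _ _ _) _.
- exact: measurable_realfun.measurable_ball.
- exact: U_measurable.
by apply: leeD.
Qed.
Lemma FL (R : realType) (mu : {measure set R -> \bar R}) (g : R -> \bar R)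
  (Jp : set R) (lam : R) (s : seq (R*R)) :
  measurable Jp -> measurable_fun Jp g -> (forall y, 0 <= g y) -> (0 <= lam)%R ->
  (forall b, b \in s -> ball b.1 b.2 `<=` Jp /\
     lam%:E * mu (ball b.1 b.2) <= \int[mu]_(y in ball b.1 b.2) g y) ->
  lam%:E * mu (U s) <= \int[mu]_(y in Jp) g y + \int[mu]_(y in Jp) g y.
Proof.
move=> mJ mg g0 l0 Hs.
have [t [ts ut Ut mt]] := RED (undup_uniq s).
rewrite U_undup in Ut; rewrite -Ut.
have Ht b : b \in t -> ball b.1 b.2 `<=` Jp /\
     lam%:E * mu (ball b.1 b.2) <= \int[mu]_(y in ball b.1 b.2) g y.
  by move=> /ts; rewrite mem_undup; exact: Hs.
have mB (b : R*R) : measurable (ball b.1 b.2) by exact: measurable_realfun.measurable_ball.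
have mgB (b : R*R) : measurable_fun Jp (g \_ (ball b.1 b.2)).
  apply/(measurable_restrict _ (mB b) mJ).
  by apply: (measurable_funS mJ _ mg); exact: subIsetl.
apply: (@le_trans _ _ (lam%:E * \sum_(b <- t) mu (ball b.1 b.2))).
  apply: lee_pmul => //; rewrite ?lee_fin //; try exact: measure_ge0; exact: mu_U_le.
rewrite ge0_sume_distrr; last by move=> b _; exact: measure_ge0.
rewrite big_seq_cond.
apply: (@le_trans _ _ (\sum_(b <- t | (b \in t) && true) \int[mu]_(y in Jp) (g \_ (ball b.1 b.2)) y)).
  apply: lee_sum => b /andP[bt _]; have [h1 h2] := Ht b bt.
  by rewrite -integral_mkcondr setIidr.
rewrite -big_seq_cond -ge0_integral_sum //; last first.
  by move=> b y _; rewrite patchE; case: ifP.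
rewrite -ge0_integralD //; apply: ge0_le_integral => //.
- by move=> y _; apply: sume_ge0 => b _; rewrite patchE; case: ifP.
- apply: emeasurable_sum => b; exact: mgB.
- exact: emeasurable_funD.
move=> y _.
rewrite (eq_bigr (fun b : R*R => if y \in (ball b.1 b.2 : set R) then g y else 0)); last first.
  by move=> b _; rewrite patchE.
rewrite -big_mkcond big_const_seq.
have := count_le2 y ut mt.
case: (count _ t) => [|[|[|n]]] //= _.
- exact: adde_ge0.
- by rewrite adde0 leeDl.
- by rewrite adde0.
Qed.
Definition Vr (R : realType) (Good : set (R*R)) (n : nat) : set R :=
  match unpickle n : option (rat * rat) with
  | Some pq => let c : R := ((ratr pq.1 + ratr pq.2) / 2)%R in
               let r : R := ((ratr pq.2 - ratr pq.1) / 2)%R in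
               if pselect (exists2 b, Good b & ball c r `<=` ball b.1 b.2)
               then ball c r else set0
  | None => set0
  end.

Lemma Vr_measurable (R : realType) (Good : set (R*R)) n : measurable (Vr Good n).
Proof.
rewrite /Vr; case: unpickle => [pq|]; last exact: measurable0.
by case: pselect => h; [exact: measurable_realfun.measurable_ball | exact: measurable0].
Qed.

Lemma Vr_sub (R : realType) (Good : set (R*R)) n :
  Vr Good n = set0 \/ exists2 b, Good b & Vr Good n `<=` ball b.1 b.2.
Proof.
rewrite /Vr; case: unpickle => [pq|]; last by left.
case: pselect => h; last by left.
by right; case: h => b gb sb; exists b.
Qed.

Definition Fr (R : realType) (Good : set (R*R)) (n : nat) : set R :=
  \big[setU/set0]_(i < n) Vr Good i.

Lemma Fr_cover (R : realType) (Good : set (R*R)) n :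
  exists s : seq (R*R), (forall b, b \in s -> Good b) /\ Fr Good n `<=` U s.
Proof.
elim: n => [|n [s [gs sub]]]; first by exists [::]; split => //; rewrite /Fr big_ord0.
rewrite /Fr big_ord_recr /= -/(Fr Good n).
have [->|[b gb sb]] := Vr_sub Good n.
  by exists s; split => // x [/sub|[]].
exists (b :: s); split.
  by move=> b'; rewrite inE => /orP[/eqP ->|/gs].
by rewrite U_cons => x [/sub h|/sb h]; [right|left].
Qed.

Lemma CNT (R : realType) (mu : {measure set R -> \bar R}) (Good : set (R*R)) (eps : \bar R) (A : set R) :
  measurable A ->
  A `<=` \bigcup_(b in Good) ball b.1 b.2 ->
  (forall s : seq (R*R), (forall b, b \in s -> Good b) -> mu (U s) <= eps) ->
  mu A <= eps.
Proof.
move=> mA AW Hs.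
have mF n : measurable (Fr Good n).
  by apply: bigsetU_measurable => i _; exact: Vr_measurable.
have mUF : measurable (\bigcup_n Fr Good n) by exact: bigcupT_measurable.
have AF : A `<=` \bigcup_n Fr Good n.
  move=> x /AW [b gb /ballP2 /andP[h1 h2]].
  have [p] := rat_in_itvoo h1; rewrite in_itv /= => /andP[p1 p2].
  have [q] := rat_in_itvoo h2; rewrite in_itv /= => /andP[q1 q2].
  exists (pickle (p, q)).+1 => //.
  rewrite /Fr big_ord_recr /=; right.
  rewrite /Vr pickleK /=.
  case: pselect => hn.
    by apply/ballP2; apply/andP; split; lra.
  exfalso; apply: hn; exists b => // w /ballP2 /andP[w1 w2]; apply/ballP2; apply/andP; split; lra.
apply: le_trans (le_measure _ _ _ AF) _; rewrite ?inE //.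
have ndF : {homo Fr Good : n m / (n <= m)%N >-> (n <= m)%O}.
  move=> n m nm; rewrite subsetEset; elim: m nm => [|m IH]; first by rewrite leqn0 => /eqP ->.
  rewrite leq_eqVlt => /orP[/eqP ->//|]; rewrite ltnS => /IH h.
  apply: subset_trans h _ => x fx; rewrite /Fr big_ord_recr /=; by left.
have H := nondecreasing_cvg_mu (mu:=mu) mF mUF ndF.
have HL := cvg_lim (@ereal_hausdorff R) H.
apply: (@le_trans _ _ (lim ((mu \o Fr Good) x @[x --> \oo]))).
  by rewrite HL.
apply: lime_le; first by apply/cvg_ex; eexists; exact: H.
apply: nearW => n /=.
have [s [gs sub]] := Fr_cover Good n.
apply: le_trans (Hs s gs).
apply: le_measure => //; rewrite inE //; exact: U_measurable.
Qed.

Lemma mgP (R : realType) (mu : {measure set R -> \bar R}) (f : R -> R) :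
  L1loc mu f -> forall c r : R, (0 < r)%R -> measurable_fun (ball c r) (fun y => (`|f y|)%:E).
Proof.
move=> Hf c r r0; have /integrableP[mf _] := Hf c r r0.
apply/measurable_EFinP; move/measurable_EFinP: mf => mf.
exact: (measurableT_comp (@normr_measurable R setT) mf).
Qed.

Lemma IfinP (R : realType) (mu : {measure set R -> \bar R}) (f : R -> R) :
  L1loc mu f -> forall c r : R, (0 < r)%R -> \int[mu]_(y in ball c r) (`|f y|)%:E < +oo.
Proof.
move=> Hf c r r0; have /integrableP[_ h] := Hf c r r0.
apply: le_lt_trans h; rewrite le_eqVlt; apply/orP; left; apply/eqP.
by apply: eq_integral => y _ /=; rewrite ?abse_EFin.
Qed.

Lemma muP (R : realType) (mu : {measure set R -> \bar R}) :
  (forall (c r : R), (0 < r)%R -> 0 < mu (ball c r) < +oo) ->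
  forall c r : R, (0 < r)%R -> mu (ball c r) = (fine (mu (ball c r)))%:E /\ (0 < fine (mu (ball c r)))%R.
Proof.
move=> Hmu c r r0; have /andP[h1 h2] := Hmu c r r0; split.
  by rewrite fineK // ge0_fin_numE // ltW.
by apply: fine_gt0; rewrite h1 h2.
Qed.

Lemma AVG (R : realType) (mu : {measure set R -> \bar R}) (f : R -> R) :
  (forall (c r : R), (0 < r)%R -> 0 < mu (ball c r) < +oo) -> L1loc mu f ->
  forall c r : R, (0 < r)%R -> exists b i : R, [/\ mu (ball c r) = b%:E, (0 < b)%R,
     \int[mu]_(y in ball c r) (`|f y|)%:E = i%:E, (0 <= i)%R &
     ball_avg mu f c r = (i / b)%:E].
Proof.
move=> Hmu Hf c r r0; have [e1 e2] := muP Hmu c r0.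
have hi : \int[mu]_(y in ball c r) (`|f y|)%:E \is a fin_num.
  rewrite ge0_fin_numE ?IfinP //; apply: integral_ge0 => y _; by rewrite lee_fin.
exists (fine (mu (ball c r))), (fine (\int[mu]_(y in ball c r) (`|f y|)%:E)); split => //.
- by rewrite fineK.
- by apply: fine_ge0; apply: integral_ge0 => y _; rewrite lee_fin.
- by rewrite /ball_avg -[in LHS](fineK hi) -EFinM mulrC.
Qed.

Lemma maxop_ub (R : realType) (mu : {measure set R -> \bar R}) (f : R -> R) (c r x : R) :
  (0 < r)%R -> ball c r x -> ball_avg mu f c r <= maxop mu f x.
Proof. by move=> r0 bx; apply: ereal_sup_ubound; exists c, r; split. Qed.

Lemma maxop_gt (R : realType) (mu : {measure set R -> \bar R}) (f : R -> R) (x : R) a :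
  a < maxop mu f x -> exists c r, [/\ (0 < r)%R, ball c r x & a < ball_avg mu f c r].
Proof. by move=> /ereal_sup_gt [y [c [r [r0 bx ->]]] ay]; exists c, r. Qed.
Lemma KEY (R : realType) (mu : {measure set R -> \bar R}) (f : R -> R)
  (Hmu : forall (c r : R), (0 < r)%R -> 0 < mu (ball c r) < +oo) (Hf : L1loc mu f)
  (y0 K Nr lam m C x c r : R) :
  maxop mu f y0 = K%:E -> (0 <= K)%R -> (0 < Nr)%R -> ball y0 Nr x ->
  (0 < r)%R -> ball c r x -> lam%:E < ball_avg mu f c r ->
  (0 < m)%R -> (m <= fine (mu (ball (y0 + Nr + 1) 1)))%R ->
  (m <= fine (mu (ball (y0 - Nr - 1) 1)))%R ->
  mu (ball y0 (Nr + 1)) = C%:E ->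
  (K * C < (lam - K) * m)%R -> (K < lam)%R ->
  ball c r `<=` ball y0 (Nr + 2) /\
  lam%:E * mu (ball c r) <= \int[mu]_(y in ball c r) (`|f y|)%:E.
Proof.
move=> hK K0 N0 /ballP2 /andP[x1 x2] r0 /ballP2 /andP[xc1 xc2] hav m0 hmR hmL hC hKC Klam.
have [b [i [eb b0 ei i0 ea]]] := AVG Hmu Hf c r0.
rewrite ea lte_fin ltr_pdivlMr // in hav.
split; last by rewrite eb ei -EFinM lee_fin ltW.
have C0 : (0 <= C)%R by rewrite -lee_fin -hC measure_ge0.
have [lo [lo1 lo2 lo3]] : exists lo : R, [/\ (lo <= c - r)%R, (lo <= y0 - 1)%R &
    lo = (c - r)%R \/ lo = (y0 - 1)%R].
  have [h|h] := leP (c - r)%R (y0 - 1)%R.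
    by exists (c - r)%R; split; rewrite ?lexx //; left.
  by exists (y0 - 1)%R; split; rewrite ?lexx ?ltW //; right.
have [hi [hi1 hi2 hi3]] : exists hi : R, [/\ (c + r <= hi)%R, (y0 + 1 <= hi)%R &
    hi = (c + r)%R \/ hi = (y0 + 1)%R].
  have [h|h] := leP (c + r)%R (y0 + 1)%R.
    by exists (y0 + 1)%R; split; rewrite ?lexx //; right.
  by exists (c + r)%R; split; rewrite ?lexx ?ltW //; left.
set c' := ((lo + hi) / 2)%R; set r' := ((hi - lo) / 2)%R.
have r'0 : (0 < r')%R by rewrite /r'; lra.
have Hb w : ball c' r' w <-> (lo < w < hi)%R.
  rewrite ballP2 /c' /r'; split => /andP[h1 h2]; apply/andP; split; lra.
have y0H : ball c' r' y0 by apply/Hb; apply/andP; split; lra.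
have [h [iH [eh h0 eiH iH0 eaH]]] := AVG Hmu Hf c' r'0.
have := maxop_ub mu f r'0 y0H; rewrite eaH hK lee_fin ler_pdivrMr // => iHK.
have sBH : ball c r `<=` ball c' r'.
  by move=> w /ballP2 /andP[w1 w2]; apply/Hb; apply/andP; split; lra.
have mB (c1 r1 : R) : measurable (ball c1 r1) by exact: measurable_realfun.measurable_ball.
have iiH : (i <= iH)%R.
  rewrite -lee_fin -ei -eiH; apply: ge0_subset_integral => //.
  exact: (@mgP _ _ _ Hf c' r' r'0).
have sHBJ : ball c' r' `<=` ball c r `|` ball y0 (Nr + 1).
  move=> w /Hb /andP[w1 w2].
  have [wl|wl] := leP w (c - r)%R.
    right; apply/ballP2; apply/andP; split; last by lra.
    case: lo3 => e; rewrite e in w1; lra.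
  have [wr|wr] := leP (c + r)%R w.
    right; apply/ballP2; apply/andP; split; first by lra.
    case: hi3 => e; rewrite e in w2; lra.
  by left; apply/ballP2; apply/andP; split.
have hbC : (h <= b + C)%R.
  rewrite -lee_fin -eh EFinD -eb -hC.
  apply: le_trans (measureU2 _ (mB _ _) (mB _ _)).
  by apply: le_measure => //; rewrite inE //; exact: measurableU.
have key : ((lam - K) * b < K * C)%R.
  have : (K * h <= K * (b + C))%R by apply: ler_wpM2l.
  nra.
move=> w /ballP2 /andP[w1 w2]; apply/ballP2; apply/andP.
have side (c1 : R) : ball c1 1 `<=` ball c r -> (m <= fine (mu (ball c1 1)))%R -> False.
  move=> sub hm.
  have [e1 e2] := muP Hmu c1 ltr01.
  have : mu (ball c1 1) <= mu (ball c r) by apply: le_measure => //; rewrite inE.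
  rewrite e1 eb lee_fin => hb.
  have : ((lam - K) * m <= (lam - K) * b)%R.
    apply: ler_wpM2l; first lra.
    exact: le_trans hm hb.
  lra.
split.
  rewrite ltNge; apply/negP => hw.
  apply: (side (y0 - Nr - 1)%R) => //.
  by move=> z /ballP2 /andP[z1 z2]; apply/ballP2; apply/andP; split; lra.
rewrite ltNge; apply/negP => hw.
apply: (side (y0 + Nr + 1)%R) => //.
by move=> z /ballP2 /andP[z1 z2]; apply/ballP2; apply/andP; split; lra.
Qed.
Unset Implicit Arguments.
Theorem proposition6p2p1 (R : realType) (mu : {measure set R -> \bar R}) :
  (forall (c r : R), (0 < r)%R -> 0 < mu (ball c r) < +oo) ->
  dichotomy mu.
Proof.
move=> Hmu f Hf.
have [allinf|] := pselect (forall x, maxop mu f x = +oo); first by right.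
move=> /existsNP [y0 hy0]; left.
have avg0 (c r : R) : (0 < r)%R -> 0 <= ball_avg mu f c r.
  move=> r0; have [b [i [_ b0 _ i0 ->]]] := AVG Hmu Hf c r0.
  by rewrite lee_fin divr_ge0 // ltW.
have My0ge : 0 <= maxop mu f y0.
  apply: le_trans (avg0 y0 1%R ltr01) _; apply: maxop_ub => //.
  by apply/ballP; rewrite subrr normr0 ltr01.
have My0 : maxop mu f y0 = (fine (maxop mu f y0))%:E.
  rewrite fineK // fin_numE; apply/andP; split; last exact/eqP.
  by apply/negP => /eqP h; move: My0ge; rewrite h.
set K := fine (maxop mu f y0).
have K0 : (0 <= K)%R by apply: fine_ge0.
set E := [set x | maxop mu f x = +oo].
have mB (c1 r1 : R) : measurable (ball c1 r1) by exact: measurable_realfun.measurable_ball.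
have mE : measurable E.
  have -> : E = \bigcap_n \bigcup_(b in [set b : R*R | (0 < b.2)%R /\
      (n%:R)%:E < ball_avg mu f b.1 b.2]) ball b.1 b.2.
    apply/seteqP; split => x.
      move=> Ex n _; have : (n%:R)%:E < maxop mu f x by rewrite Ex ltry.
      by move/maxop_gt => [c [r [r0 bx h]]]; exists (c, r).
    move=> hx /=; case Mx: (maxop mu f x) => [a| |] //.
      have [[c r] [/= r0 h] bx] := hx (Num.Def.trunc a).+1 I.
      have := maxop_ub mu f r0 bx; rewrite Mx => h2.
      have := lt_le_trans h h2; rewrite lte_fin => h3.
      by have := truncnS_gt a; rewrite ltNge (ltW h3).
    have [[c r] [/= r0 h] bx] := hx 0%N I.
    by have := maxop_ub mu f r0 bx; rewrite Mx leeNy_eq => /eqP hh; rewrite hh in h.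
  apply: bigcapT_measurable => n; apply: open_measurable; apply: bigcup_open => b _.
  exact: ball_open.
have core (N : nat) : mu (E `&` ball y0 (N.+1%:R)) = 0.
  set Nr := (N.+1%:R : R).
  have N0 : (0 < Nr)%R by rewrite /Nr ltr0n.
  have [hC _] := @muP R mu Hmu y0 (Nr + 1)%R ltac:(lra).
  set C := fine (mu (ball y0 (Nr + 1)%R)) in hC.
  have [_ mR0] := muP Hmu (y0 + Nr + 1)%R ltr01.
  have [_ mL0] := muP Hmu (y0 - Nr - 1)%R ltr01.
  set mR := fine (mu (ball (y0 + Nr + 1)%R 1)) in mR0.
  set mL := fine (mu (ball (y0 - Nr - 1)%R 1)) in mL0.
  set m := Num.min mR mL.
  have m0 : (0 < m)%R by rewrite lt_min mR0 mL0.
  have hmR : (m <= mR)%R by rewrite ge_min lexx.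
  have hmL : (m <= mL)%R by rewrite ge_min lexx orbT.
  have C0 : (0 <= C)%R by rewrite -lee_fin -hC measure_ge0.
  set Jp := ball y0 (Nr + 2)%R.
  have Jp0 : (0 < Nr + 2)%R by lra.
  have hIp : \int[mu]_(y in Jp) (`|f y|)%:E = (fine (\int[mu]_(y in Jp) (`|f y|)%:E))%:E.
    rewrite fineK // ge0_fin_numE ?IfinP //; apply: integral_ge0 => y _; by rewrite lee_fin.
  set Ip := fine (\int[mu]_(y in Jp) (`|f y|)%:E) in hIp.
  have Ip0 : (0 <= Ip)%R by rewrite -lee_fin -hIp; apply: integral_ge0 => y _; rewrite lee_fin.
  apply/eqP; rewrite eq_le measure_ge0 andbT.
  apply/lee_addgt0Pr => eps e0; rewrite add0e.
  set lam := (K + 1 + K * C / m + 2 * Ip / eps)%R.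
  have t1 : (0 <= K * C / m)%R by apply: divr_ge0 => //; [exact: mulr_ge0 | exact: ltW].
  have t2 : (0 <= 2 * Ip / eps)%R by apply: divr_ge0 => //; [lra | exact: ltW].
  have Klam : (K < lam)%R by rewrite /lam; lra.
  have hKC : (K * C < (lam - K) * m)%R.
    have -> : ((lam - K) * m = m + K * C + 2 * Ip / eps * m)%R.
      by rewrite /lam; field; rewrite !gt_eqF.
    have : (0 <= 2 * Ip / eps * m)%R by apply: mulr_ge0 => //; exact: ltW.
    lra.
  have hle : (2 * Ip <= lam * eps)%R.
    have -> : (lam * eps = (K + 1 + K * C / m) * eps + 2 * Ip)%R.
      by rewrite /lam; field; rewrite !gt_eqF.
    have : (0 <= (K + 1 + K * C / m) * eps)%R by apply: mulr_ge0; lra.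
    lra.
  have lam0 : (0 < lam)%R by lra.
  apply: (@CNT R mu [set b : R*R | (0 < b.2)%R /\ ball b.1 b.2 `<=` Jp /\
      lam%:E * mu (ball b.1 b.2) <= \int[mu]_(y in ball b.1 b.2) (`|f y|)%:E]).
  - exact: measurableI.
  - move=> x [Ex bx].
    have : lam%:E < maxop mu f x by rewrite Ex ltry.
    move/maxop_gt => [c [r [r0 bxr hav]]].
    have [h1 h2] := KEY Hmu Hf My0 K0 N0 bx r0 bxr hav m0 hmR hmL hC hKC Klam.
    by exists (c, r).
  - move=> s gs.
    have := @FL R mu (fun y => (`|f y|)%:E) Jp lam s (mB _ _) (@mgP _ _ _ Hf y0 _ Jp0)
      (fun y => ltac:(by rewrite lee_fin)) (ltW lam0).
    have gs' : forall b, b \in s -> ball b.1 b.2 `<=` Jp /\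
      lam%:E * mu (ball b.1 b.2) <= \int[mu]_(y in ball b.1 b.2) (`|f y|)%:E.
      by move=> b /gs [_ h].
    move=> /(_ gs'); rewrite hIp -EFinD => h.
    rewrite -(lee_pmul2l (x := lam%:E)) // ?lte_fin //.
    apply: le_trans h _; rewrite -EFinM lee_fin; lra.
have EU : E = \bigcup_N (E `&` ball y0 (N.+1%:R)).
  apply/seteqP; split => [x Ex|x [N _ []]] //.
  exists (Num.Def.trunc `|y0 - x|%R) => //; split => //.
  by apply/ballP; exact: truncnS_gt.
have : mu.-negligible (\bigcup_N (E `&` ball y0 (N.+1%:R))).
  apply: negligible_bigcup => N; apply/negligibleP; last exact: core.
  exact: measurableI.
by rewrite -EU; move/negligibleP => ->.
Qed.
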